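(* Let $\mathbb{X}$ be a real or complex Banach algebra with identity, $\mathcal{G}$ its group of units, $k\ge1$ an integer, and $g_n:\mathbb{X}\to\mathbb{X}$ ($n\ge0$) functions with $|g_n(\xi)|\le\sigma|\xi|$ for all $\xi\in\mathbb{X}$, all $n$, for some real $\sigma>0$. Let $a\in\mathcal{G}$ and $b_0,\dots,b_k\in\mathbb{X}$ with $b_k\ne0$. If $|a|<1$, $$b_0a^k+b_1a^{k-1}+\cdots+b_{k-1}a+b_k=0,$$ and $$\sum_{i=0}^{k-1}\big|b_0a^i+b_1a^{i-1}+\cdots+b_i\big|<\frac1\sigma,$$ then every solution of $$x_{n+1}=ax_n+g_n\big(b_0x_n+b_1x_{n-1}+\cdots+b_kx_{n-k}\big),\quad n\ge0,$$ with initial values in $\mathbb{X}$ converges to $0$.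
   Context: A Banach algebra with identity is a Banach space $\mathbb{X}$ (norm $|\cdot|$) with an associative bilinear multiplication satisfying $|xy|\le|x||y|$ and identity $1$ with $|1|=1$; $\mathcal{G}$ is the set of invertible elements. *)

(* Defs.v *)
From Stdlib Require Export Reals.
Open Scope R_scope.

(* A real Banach algebra with identity (a complex Banach algebra is in
   particular a real one, with the same norm, by restriction of scalars). *)
Record BanachAlgebra := {
  carrier :> Type;
  add : carrier -> carrier -> carrier;
  opp : carrier -> carrier;
  zero : carrier;
  scal : R -> carrier -> carrier;
  mul : carrier -> carrier -> carrier;
  one : carrier;
  norm : carrier -> R;
  add_assoc : forall x y z, add x (add y z) = add (add x y) z;
  add_comm : forall x y, add x y = add y x;
  add_0_l : forall x, add zero x = x;
  add_opp_l : forall x, add (opp x) x = zero;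
  scal_assoc : forall r s x, scal r (scal s x) = scal (r * s) x;
  scal_1 : forall x, scal 1 x = x;
  scal_add_l : forall r s x, scal (r + s) x = add (scal r x) (scal s x);
  scal_add_r : forall r x y, scal r (add x y) = add (scal r x) (scal r y);
  mul_assoc : forall x y z, mul x (mul y z) = mul (mul x y) z;
  mul_1_l : forall x, mul one x = x;
  mul_1_r : forall x, mul x one = x;
  mul_add_l : forall x y z, mul (add x y) z = add (mul x z) (mul y z);
  mul_add_r : forall x y z, mul x (add y z) = add (mul x y) (mul x z);
  mul_scal_l : forall r x y, mul (scal r x) y = scal r (mul x y);
  mul_scal_r : forall r x y, mul x (scal r y) = scal r (mul x y);
  norm_zero_iff : forall x, norm x = 0 <-> x = zero;
  norm_triangle : forall x y, norm (add x y) <= norm x + norm y;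
  norm_scal : forall r x, norm (scal r x) = Rabs r * norm x;
  norm_mul : forall x y, norm (mul x y) <= norm x * norm y;
  norm_one : norm one = 1;
  complete : forall u : nat -> carrier,
    (forall eps, eps > 0 -> exists N, forall m n, (m >= N)%nat -> (n >= N)%nat ->
        norm (add (u m) (opp (u n))) < eps) ->
    exists l, forall eps, eps > 0 -> exists N, forall n, (n >= N)%nat ->
        norm (add (u n) (opp l)) < eps
}.

Arguments add {b}. Arguments opp {b}. Arguments zero {b}. Arguments scal {b}.
Arguments mul {b}. Arguments one {b}. Arguments norm {b}.

Definition invertible {X : BanachAlgebra} (a : X) : Prop :=
  exists y : X, mul a y = one /\ mul y a = one.

Fixpoint powX {X : BanachAlgebra} (a : X) (n : nat) : X :=
  match n with O => one | S m => mul a (powX a m) end.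

Fixpoint sumX {X : BanachAlgebra} (f : nat -> X) (n : nat) : X :=
  match n with O => zero | S m => add (sumX f m) (f m) end.

(* Main.v *)
Require Import Defs.
From Stdlib Require Import Reals Lra Lia.
Open Scope R_scope.

Lemma add_0_r' {X : BanachAlgebra} (x : X) : add x zero = x.
Proof. rewrite add_comm; apply add_0_l. Qed.

Lemma add_opp_r' {X : BanachAlgebra} (x : X) : add x (opp x) = zero.
Proof. rewrite add_comm; apply add_opp_l. Qed.

Lemma add_cancel {X : BanachAlgebra} (a x y : X) : add a x = add a y -> x = y.
Proof.
  intro H. rewrite <- (add_0_l _ x), <- (add_0_l _ y), <- (add_opp_l _ a).
  rewrite <- !add_assoc, H. reflexivity.
Qed.

Lemma mul_0_l' {X : BanachAlgebra} (y : X) : mul zero y = zero.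
Proof.
  apply (add_cancel (mul zero y)). rewrite <- mul_add_l, add_0_l, add_0_r'. reflexivity.
Qed.

Lemma mul_0_r' {X : BanachAlgebra} (y : X) : mul y zero = zero.
Proof.
  apply (add_cancel (mul y zero)). rewrite <- mul_add_r, add_0_l, add_0_r'. reflexivity.
Qed.

Lemma scal_0 {X : BanachAlgebra} (y : X) : scal 0 y = zero.
Proof.
  apply (add_cancel (scal 0 y)). rewrite <- scal_add_l, Rplus_0_r, add_0_r'. reflexivity.
Qed.

Lemma opp_scal {X : BanachAlgebra} (y : X) : opp y = scal (-1) y.
Proof.
  apply (add_cancel y). rewrite add_opp_r'.
  rewrite <- (scal_1 _ y) at 1. rewrite <- scal_add_l.
  replace (1 + -1) with 0 by ring. symmetry; apply scal_0.
Qed.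

Lemma norm_opp {X : BanachAlgebra} (y : X) : norm (opp y) = norm y.
Proof. rewrite opp_scal, norm_scal. replace (-1) with (-(1)) by ring. rewrite Rabs_Ropp, Rabs_R1. ring. Qed.

Lemma norm_zero' {X : BanachAlgebra} : norm (@zero X) = 0.
Proof. apply norm_zero_iff. reflexivity. Qed.

Lemma norm_nonneg {X : BanachAlgebra} (y : X) : 0 <= norm y.
Proof.
  pose proof (norm_triangle _ y (opp y)). rewrite add_opp_r', norm_zero', norm_opp in H. lra.
Qed.

Lemma powX_S_r {X : BanachAlgebra} (a : X) n : powX a (S n) = mul (powX a n) a.
Proof.
  induction n; simpl.
  - rewrite mul_1_l, mul_1_r. reflexivity.
  - simpl in IHn. rewrite IHn, mul_assoc, IHn. reflexivity.
Qed.

Lemma sumX_ext {X : BanachAlgebra} (f g : nat -> X) n :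
  (forall i, (i < n)%nat -> f i = g i) -> sumX f n = sumX g n.
Proof.
  induction n; intro H; simpl; auto.
  rewrite IHn, H; auto.
Qed.

Lemma sumX_mul_r {X : BanachAlgebra} (f : nat -> X) y n :
  mul (sumX f n) y = sumX (fun j => mul (f j) y) n.
Proof.
  induction n; simpl. apply mul_0_l'. rewrite mul_add_l, IHn. reflexivity.
Qed.

Fixpoint sumR (f : nat -> R) (n : nat) : R :=
  match n with O => 0 | S m => sumR f m + f m end.

Lemma sumR_f_R0 f n : sum_f_R0 f n = sumR f (S n).
Proof. induction n; simpl. lra. rewrite IHn. simpl. reflexivity. Qed.

Lemma sumR_le f g n : (forall i, (i < n)%nat -> f i <= g i) -> sumR f n <= sumR g n.
Proof. induction n; intro H; simpl. lra. pose proof (H n (Nat.lt_succ_diag_r n)). apply Rplus_le_compat; auto. Qed.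

Lemma sumR_scal c f n : sumR (fun i => c * f i) n = c * sumR f n.
Proof. induction n; simpl. ring. rewrite IHn. ring. Qed.

Lemma sumR_nonneg f n : (forall i, (i < n)%nat -> 0 <= f i) -> 0 <= sumR f n.
Proof. induction n; intro H; simpl. lra. pose proof (H n (Nat.lt_succ_diag_r n)). pose proof (IHn (fun i h => H i (Nat.lt_lt_succ_r _ _ h))). lra. Qed.

Lemma sumR_term f n j : (forall i, (i < n)%nat -> 0 <= f i) -> (j < n)%nat -> f j <= sumR f n.
Proof.
  induction n; intros H Hj. lia. simpl.
  destruct (Nat.eq_dec j n).
  - subst. pose proof (sumR_nonneg f n (fun i h => H i (Nat.lt_lt_succ_r _ _ h))). lra.
  - pose proof (H n (Nat.lt_succ_diag_r n)) as H0.
    assert (Hjn : (j < n)%nat) by lia.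
    pose proof (IHn (fun i h => H i (Nat.lt_lt_succ_r _ _ h)) Hjn). lra.
Qed.

Lemma norm_sumX {X : BanachAlgebra} (c y : nat -> X) n :
  norm (sumX (fun i => mul (c i) (y i)) n) <= sumR (fun i => norm (c i) * norm (y i)) n.
Proof.
  induction n; simpl. rewrite norm_zero'; lra.
  eapply Rle_trans. apply norm_triangle.
  pose proof (norm_mul _ (c n) (y n)). lra.
Qed.

Lemma add_rearr {X : BanachAlgebra} (A B C D : X) :
  add (add (add A C) D) B = add (add A B) (add D C).
Proof.
  rewrite <- !add_assoc. f_equal.
  rewrite (add_comm _ D C), (add_assoc _ B C D), (add_comm _ B C), <- add_assoc. f_equal.
  apply add_comm.
Qed.

Lemma sumR_scal_r f c n : sumR (fun i => f i * c) n = sumR f n * c.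
Proof. induction n; simpl. ring. rewrite IHn. ring. Qed.

Definition cc {X : BanachAlgebra} (a : X) (b : nat -> X) i :=
  sumX (fun j => mul (b j) (powX a (i - j))) (S i).
Definition EE {X : BanachAlgebra} (a : X) (x : nat -> X) m :=
  add (x (S m)) (opp (mul a (x m))).

Lemma x_succ {X : BanachAlgebra} (a : X) x m : x (S m) = add (mul a (x m)) (EE a x m).
Proof.
  unfold EE. rewrite (add_comm _ (x (S m))), add_assoc, add_opp_r', add_0_l. reflexivity.
Qed.

Lemma cc_succ {X : BanachAlgebra} (a : X) b r :
  cc a b (S r) = add (mul (cc a b r) a) (b (S r)).
Proof.
  unfold cc. change (sumX ?f (S (S r))) with (add (sumX f (S r)) (f (S r))); cbv beta.
  rewrite Nat.sub_diag. simpl powX at 2. rewrite mul_1_r. f_equal.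
  rewrite sumX_mul_r. apply sumX_ext. intros i Hi.
  replace (S r - i)%nat with (S (r - i)) by lia.
  rewrite powX_S_r, mul_assoc. reflexivity.
Qed.

Lemma Qlem {X : BanachAlgebra} (a : X) b x r : forall m,
  sumX (fun j => mul (b j) (x (m + r - j)%nat)) (S r) =
  add (mul (cc a b r) (x m)) (sumX (fun i => mul (cc a b i) (EE a x (m + (r - S i))%nat)) r).
Proof.
  induction r; intro m.
  - simpl. unfold cc. simpl. rewrite mul_1_r, !add_0_l, add_0_r'.
    replace (m + 0 - 0)%nat with m by lia. reflexivity.
  - change (sumX ?f (S (S r))) with (add (sumX f (S r)) (f (S r))); cbv beta.
    rewrite (sumX_ext _ (fun j => mul (b j) (x (S m + r - j)%nat))).
    2:{ intros i Hi. do 2 f_equal. lia. }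
    rewrite IHr. replace (m + S r - S r)%nat with m by lia. cbv beta.
    change (sumX ?f (S r)) with (add (sumX f r) (f r)); cbv beta.
    idtac.
    rewrite (sumX_ext (fun i => mul (cc a b i) (EE a x (m + (S r - S i))%nat))
                      (fun i => mul (cc a b i) (EE a x (S m + (r - S i))%nat))).
    2:{ intros i Hi. do 2 f_equal. lia. }
    replace (m + (S r - S r))%nat with m by lia.
    rewrite (x_succ a x m), cc_succ, mul_add_r, mul_add_l, mul_assoc.
    apply add_rearr.
Qed.

Lemma Rdiv_le_0_compat' a b : 0 <= a -> 0 < b -> 0 <= a / b.
Proof. intros. unfold Rdiv. apply Rmult_le_pos; [lra|]. left; apply Rinv_0_lt_compat; lra. Qed.

Lemma pow_le1' r n : 0 <= r <= 1 -> r ^ n <= 1.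
Proof. intro H. induction n; simpl. lra. assert (0 <= r ^ n) by (apply pow_le; lra). nra. Qed.

Lemma bernoulli t n : 0 <= t <= 1 -> 1 - INR n * t <= (1 - t) ^ n.
Proof.
  intro Ht. induction n.
  - simpl. lra.
  - rewrite S_INR. simpl.
    assert (0 <= (1-t)^n) by (apply pow_le; lra).
    destruct (Rle_dec 0 (1 - INR n * t)).
    + assert (0 <= INR n) by apply pos_INR. nra.
    + assert (0 <= INR n) by apply pos_INR. nra.
Qed.

Lemma strong_ind (P : nat -> Prop) : (forall m, (forall j, (j < m)%nat -> P j) -> P m) -> forall m, P m.
Proof.
  intros H m. assert (forall N j, (j < N)%nat -> P j).
  { induction N; intros j Hj. lia. apply H. intros j' Hj'. apply IHN. lia. }
  apply (H0 (S m)). lia.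
Qed.

Theorem corollary1 (X : BanachAlgebra) (k : nat) (hk : (1 <= k)%nat)
  (sigma : R) (hsigma : 0 < sigma) (g : nat -> X -> X)
  (hg : forall (n : nat) (xi : X), norm (g n xi) <= sigma * norm xi)
  (a : X) (ha : invertible a) (b : nat -> X) (hbk : b k <> zero)
  (ha1 : norm a < 1)
  (hchar : sumX (fun j => mul (b j) (powX a (k - j))) (S k) = zero)
  (hsum : sum_f_R0 (fun i => norm (sumX (fun j => mul (b j) (powX a (i - j))) (S i)))
            (k - 1) < 1 / sigma)
  (x : nat -> X)
  (hrec : forall n : nat,
     x (n + k + 1)%nat =
       add (mul a (x (n + k)%nat))
           (g n (sumX (fun j => mul (b j) (x (n + k - j)%nat)) (S k)))) :
  Un_cv (fun n => norm (x n)) 0.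
Proof.
  set (w := fun i => norm (cc a b i)).
  set (e := fun m => norm (EE a x m)).
  assert (key : forall n, e (n + k)%nat <= sigma * sumR (fun i => w i * e (n + (k - S i))%nat) k).
  { intro n. unfold e, w, EE. replace (S (n+k)) with (n+k+1)%nat by lia. rewrite hrec.
    rewrite (add_comm _ (mul a _) (g _ _)), <- add_assoc, add_opp_r', add_0_r'.
    eapply Rle_trans; [apply hg|]. apply Rmult_le_compat_l; [lra|].
    rewrite (Qlem a b x k n).
    change (cc a b k) with (sumX (fun j => mul (b j) (powX a (k - j))) (S k)).
    rewrite hchar, mul_0_l', add_0_l. apply norm_sumX. }
  set (W := sumR w k).
  assert (hW : W < 1 / sigma).
  { unfold W. replace k with (S (k - 1)) at 1 by lia. rewrite <- sumR_f_R0. exact hsum. }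
  assert (hw0 : forall i, 0 <= w i) by (intro; apply norm_nonneg).
  assert (he0 : forall i, 0 <= e i) by (intro; apply norm_nonneg).
  assert (hW0 : 0 <= W) by (apply sumR_nonneg; auto).
  set (th := sigma * W).
  assert (hth : 0 <= th < 1).
  { unfold th. split. nra. apply (Rmult_lt_compat_l sigma) in hW; auto.
    replace (sigma * (1/sigma)) with 1 in hW by (field; lra). exact hW. }
  assert (hkR : 1 <= INR k) by (apply (le_INR 1); exact hk).
  set (rho := 1 - (1 - th) / (2 * INR k)).
  assert (hrho : 0 < rho < 1).
  { unfold rho. split.
    - apply Rlt_Rminus. apply Rmult_lt_reg_r with (2 * INR k). lra.
      unfold Rdiv. rewrite Rmult_assoc, Rinv_l, Rmult_1_l, Rmult_1_r by lra. lra.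
    - assert (0 < (1 - th) / (2 * INR k)). apply Rdiv_lt_0_compat; lra. lra. }
  assert (hrhok : th <= rho ^ k).
  { eapply Rle_trans; [|apply bernoulli].
    - unfold Rdiv. field_simplify; lra.
    - split. apply Rdiv_le_0_compat'; lra.
      apply Rmult_le_reg_r with (2 * INR k). lra.
      unfold Rdiv. rewrite Rmult_assoc, Rinv_l, Rmult_1_l, Rmult_1_r by lra. lra. }
  set (C := sumR (fun j => e j / rho ^ j) k).
  assert (hC0 : 0 <= C).
  { apply sumR_nonneg. intros i _. apply Rdiv_le_0_compat'; auto. apply pow_lt; lra. }
  assert (heC : forall m, e m <= C * rho ^ m).
  { apply strong_ind. intros m IH.
    assert (hpm : 0 < rho ^ m) by (apply pow_lt; lra).
    destruct (Nat.lt_ge_cases m k) as [Hm|Hm].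
    - assert (e m / rho ^ m <= C).
      { apply (sumR_term (fun j => e j / rho ^ j)); auto.
        intros i _. apply Rdiv_le_0_compat'; auto. apply pow_lt; lra. }
      apply Rmult_le_reg_r with (/ rho ^ m). apply Rinv_0_lt_compat; auto.
      rewrite Rmult_assoc, Rinv_r by lra. rewrite Rmult_1_r. exact H.
    - replace m with (m - k + k)%nat by lia. set (n := (m - k)%nat).
      eapply Rle_trans; [apply key|].
      assert (hpn : 0 < rho ^ n) by (apply pow_lt; lra).
      eapply Rle_trans with (sigma * sumR (fun i => w i * (C * rho ^ n)) k).
      + apply Rmult_le_compat_l; [lra|]. apply sumR_le. intros i Hi.
        apply Rmult_le_compat_l; auto.
        eapply Rle_trans; [apply IH; lia|].
        apply Rmult_le_compat_l; auto.
        replace (n + (k - S i))%nat with (n + (k - S i) + 0)%nat by lia.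
        rewrite pow_add. rewrite pow_add. simpl. 
        assert (rho ^ (k - S i) <= 1) by (apply pow_le1'; lra).
        assert (0 <= rho ^ (k - S i)) by (apply pow_le; lra). nra.
      + rewrite (sumR_scal_r w (C * rho ^ n) k). fold W.
        rewrite pow_add.
        assert (th * (C * rho ^ n) <= rho ^ k * (C * rho ^ n)).
        { apply Rmult_le_compat_r; auto. nra. }
        unfold th in H. nra. }
  set (al := norm a).
  assert (hal : 0 <= al < 1) by (split; [apply norm_nonneg|exact ha1]).
  set (be := (1 + Rmax al rho) / 2).
  assert (hbe : al < be /\ rho < be /\ be < 1).
  { unfold be. pose proof (Rmax_l al rho). pose proof (Rmax_r al rho).
    destruct (Rmax_Rle al rho rho) as [_ _]. 
    assert (Rmax al rho < 1) by (apply Rmax_lub_lt; lra). lra. }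
  set (D := norm (x 0%nat) + C / (be - al)).
  assert (hD : C <= D * (be - al)).
  { unfold D. rewrite Rmult_plus_distr_r. unfold Rdiv.
    rewrite Rmult_assoc, Rinv_l, Rmult_1_r by lra.
    pose proof (norm_nonneg (x 0%nat)). nra. }
  assert (hD0 : 0 <= D).
  { unfold D. pose proof (norm_nonneg (x 0%nat)). assert (0 <= C / (be - al)).
    apply Rdiv_le_0_compat'; lra. lra. }
  assert (hx : forall m, norm (x m) <= D * be ^ m).
  { induction m.
    - simpl. unfold D. rewrite Rmult_1_r. assert (0 <= C / (be - al)).
      apply Rdiv_le_0_compat'; lra. lra.
    - rewrite (x_succ a x m). eapply Rle_trans; [apply norm_triangle|].
      pose proof (norm_mul _ a (x m)). pose proof (heC m). fold e.
      assert (rho ^ m <= be ^ m) by (apply pow_incr; lra).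
      assert (0 <= be ^ m) by (apply pow_le; lra).
      simpl. fold al in H.
      assert (al * norm (x m) <= al * (D * be ^ m)) by (apply Rmult_le_compat_l; lra).
      assert (C * rho ^ m <= C * be ^ m) by (apply Rmult_le_compat_l; lra).
      change (norm (EE a x m)) with (e m).
      assert (C * be ^ m <= D * (be - al) * be ^ m) by (apply Rmult_le_compat_r; lra).
      nra. }
  intros eps Heps.
  destruct (pow_lt_1_zero be ltac:(rewrite Rabs_right; lra) (eps / (D + 1)))
    as [N HN].
  { apply Rdiv_lt_0_compat; lra. }
  exists N. intros n Hn. specialize (HN n Hn). unfold R_dist.
  rewrite Rminus_0_r, Rabs_right by apply Rle_ge, norm_nonneg.
  rewrite Rabs_right in HN by (apply Rle_ge, pow_le; lra).
  eapply Rle_lt_trans; [apply hx|].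
  apply Rmult_lt_compat_l with (r := D + 1) in HN; [|lra].
  replace ((D + 1) * (eps / (D + 1))) with eps in HN by (field; lra).
  assert (0 <= be ^ n) by (apply pow_le; lra). nra.
Qed.
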